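(* Let $\alpha\in\mathbb{Q}(i)\setminus\mathbb{R}$ with $|\alpha|>1$, with minimal primitive polynomial $P_\alpha(X)=a_2X^2+a_1X+a_0$ ($a_0,a_1,a_2\in\mathbb{Z}$ coprime, $a_2>0$, $P_\alpha(\alpha)=0$), and $\mathcal{D}=\{0,\ldots,|a_0|-1\}$; write $\alpha=\frac{num(\alpha)}{den(\alpha)}$ with $num(\alpha),den(\alpha)\in\mathbb{Z}[i]$ having no common Gaussian prime divisor. Then for every $k\in\mathbb{Z}$ and every sequence $(d_j)_{j\le k}$ in $\mathcal{D}$, the series $\sum_{j\le k}d_j\alpha^j$ converges in $\mathbb{C}$ and in $K_p$ for every Gaussian prime $p$ dividing $den(\alpha)$; hence it is the $\alpha$-expansion of some ambinumber $(x,y)\in\mathbb{C}\times K_{den(\alpha)}$.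
   Context: For a Gaussian prime $p$, $\nu_p$ is the exponent of $p$ in the Gaussian prime factorization of a nonzero element of $\mathbb{Q}(i)$ ($\nu_p(0)=\infty$), $|x|_p=N(p)^{-\nu_p(x)}$ with $N(p)$ the norm of $p$, and $K_p$ is the completion of $\mathbb{Q}(i)$ for $|\cdot|_p$. $K_{den(\alpha)}=\prod_{p\mid den(\alpha)}K_p$ (product over Gaussian primes, up to associates). For $(x,y)\in\mathbb{C}\times K_{den(\alpha)}$ with $y=(y_p)_p$, a series $\sum_{j\le k}d_j\alpha^j$ ($d_j\in\mathcal{D}$, $d_k\ne0$ whenever $k\ge1$) is an $\alpha$-expansion of $(x,y)$ if it converges to $x$ in $\mathbb{C}$ and to $y_p$ in $K_p$ for each $p\mid den(\alpha)$. *)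

(* Defs.v *)
(* C is modelled as R[i] (mathcomp-real-closed complex)
   over an arbitrary R : realType; Q(i) is the set of elements of R[i]
   with rational real and imaginary parts. *)
From HB Require Import structures.
From mathcomp Require Import all_boot all_order all_algebra.
From mathcomp Require Import reals complex.
From Stdlib Require Import ClassicalEpsilon.

Set Implicit Arguments.
Unset Strict Implicit.
Unset Printing Implicit Defensive.

Import Order.TTheory GRing.Theory Num.Theory.
Local Open Scope ring_scope.

Definition gaussRat {R : realType} (x : R[i]) : Prop :=
  exists a b : rat, x = Complex (ratr a) (ratr b).

Definition gaussInt {R : realType} (x : R[i]) : Prop :=
  exists a b : int, x = Complex (a%:~R) (b%:~R).

Definition gdvd {R : realType} (a b : R[i]) : Prop :=
  exists c, gaussInt c /\ b = a * c.

Definition gunit {R : realType} (u : R[i]) : Prop :=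
  gaussInt u /\ exists v, gaussInt v /\ u * v = 1.

Definition gprime {R : realType} (p : R[i]) : Prop :=
  [/\ gaussInt p, p <> 0, ~ gunit p &
      forall a b, gaussInt a -> gaussInt b -> p = a * b -> gunit a \/ gunit b].

Definition is_pval {R : realType} (p x : R[i]) (n : int) : Prop :=
  exists a b, gaussInt a /\ gaussInt b /\ b <> 0 /\ ~ gdvd p a /\
                ~ gdvd p b /\ x = p ^ n * (a / b).

(* nu_p(x) for nonzero x in Q(i) (the value at 0 is irrelevant since |0|_p = 0). *)
Definition pval {R : realType} (p x : R[i]) : int :=
  epsilon (inhabits 0%R) (is_pval p x).

Definition gnorm {R : realType} (p : R[i]) : R := complex.Re p ^+ 2 + complex.Im p ^+ 2.

Definition absp {R : realType} (p x : R[i]) : R :=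
  if x == 0 then 0 else gnorm p ^ (- pval p x).

(* Partial sums of sum_{j <= k} d_j alpha^j : the n-th one is
   sum_{k-n < j <= k} d_j alpha^j. *)
Definition alpha_psum {R : realType} (alpha : R[i]) (k : int) (d : int -> nat)
    (n : nat) : R[i] :=
  \sum_(i < n) (d (k - i%:Z))%:R * alpha ^ (k - i%:Z).

Definition cvgC {R : realType} (u : nat -> R[i]) : Prop :=
  exists l : R[i], forall e : R, 0 < e ->
    exists N, forall n, (N <= n)%N -> `|u n - l| < e%:C%C.

(* Convergence in K_p of a sequence of Q(i): since K_p is the completion of
   Q(i) for |.|_p, this means the sequence is |.|_p-Cauchy. *)
Definition cvgKp {R : realType} (p : R[i]) (u : nat -> R[i]) : Prop :=
  forall e : R, 0 < e -> exists N, forall m n, (N <= m)%N -> (N <= n)%N ->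
    absp p (u m - u n) < e.

(* Main.v *)
From HB Require Import structures.
From mathcomp Require Import all_boot all_order all_algebra.
From mathcomp Require Import reals complex.
From mathcomp Require Import classical_sets.
From mathcomp Require Import ring lra zify.
From Stdlib Require Import Classical ClassicalEpsilon.
Require Import Defs.
Import Order.TTheory GRing.Theory Num.Theory.
Local Open Scope ring_scope.

Module Aux.
Local Open Scope classical_set_scope.
Local Open Scope complex_scope.

Lemma mono_cvg (R : realType) (u : nat -> R) (B : R) :
  (forall n, u n <= u n.+1) -> (forall n, u n <= B) ->
  exists l, forall e, 0 < e -> exists N, forall n, (N <= n)%N -> `|u n - l| < e.
Proof.
move=> hu hB.
have mono : forall m n, (m <= n)%N -> u m <= u n.
  move=> m n /subnK <-; elim: (n - m)%N => [|j IH]; first by rewrite add0n.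
  by rewrite addSn; apply: le_trans IH (hu _).
set E := [set x | exists n, x = u n].
have hs : has_sup E.
  split; first by exists (u 0%N), 0%N.
  by exists B => x [n ->].
exists (sup E) => e e0.
have [x [N ->] hx] := sup_adherent e0 hs.
exists N => n hn.
have h1 : u n <= sup E by apply: sup_upper_bound => //; exists n.
have h2 := mono _ _ hn.
rewrite ler0_norm ?subr_le0 //; lra.
Qed.


Section NR.
Variable R : realType.
Definition nr (z : R[i]) : R := Num.sqrt (complex.Re z ^+ 2 + complex.Im z ^+ 2).
Lemma nrC z : (nr z)%:C = `|z|. Proof. by rewrite normc_def. Qed.
Lemma nr_ge0 z : 0 <= nr z. Proof. exact: sqrtr_ge0. Qed.
Lemma Re_le_nr z : `|complex.Re z| <= nr z.
Proof. rewrite -sqrtr_sqr; apply: ler_wsqrtr; have := sqr_ge0 (complex.Im z); lra. Qed.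
Lemma Im_le_nr z : `|complex.Im z| <= nr z.
Proof. rewrite -sqrtr_sqr; apply: ler_wsqrtr; have := sqr_ge0 (complex.Re z); lra. Qed.
Lemma nr_le z : nr z <= `|complex.Re z| + `|complex.Im z|.
Proof.
rewrite -[X in _ <= X]ger0_norm ?addr_ge0 // -sqrtr_sqr; apply: ler_wsqrtr.
rewrite sqrrD (real_normK (num_real (complex.Re z))) (real_normK (num_real (complex.Im z))).
have h := mulr_ge0 (normr_ge0 (complex.Re z)) (normr_ge0 (complex.Im z)).
rewrite mulr2n; lra.
Qed.
Lemma geom (q : R) n : \sum_(i < n) q ^+ i * (1 - q) = 1 - q ^+ n.
Proof.
elim: n => [|n IH]; first by rewrite big_ord0 expr0 subrr.
rewrite big_ord_recr /= IH exprS; ring.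
Qed.
End NR.
Arguments nr {R}. Arguments nrC {R}. Arguments nr_ge0 {R}. Arguments Re_le_nr {R}. Arguments Im_le_nr {R}. Arguments nr_le {R}. Arguments geom {R}.

Lemma partC (R : realType) (alpha : R[i]) (k : int) (d : int -> nat) (D : nat) :
  1 < `|alpha| -> (forall j : int, j <= k -> (d j < D)%N) ->
  cvgC (alpha_psum alpha k d).
Proof.
move=> ha hd.
have rho1 : 1 < nr alpha by rewrite -ltcR nrC.
have a0 : alpha != 0.
  by apply/negP => /eqP a0; move: rho1; rewrite -ltcR nrC a0 normr0 ltr10.
set q := (nr alpha)^-1.
have q0 : 0 < q by rewrite invr_gt0; lra.
have q1 : q < 1 by rewrite invf_lt1; lra.
set t := fun i : nat => (d (k - i%:Z))%:R * alpha ^ (k - i%:Z).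
set M := D%:R * nr (alpha ^ k).
have M0 : 0 <= M by rewrite mulr_ge0 ?nr_ge0.
have tb : forall i, nr (t i) <= M * q ^+ i.
  move=> i; rewrite -lecR nrC /M /q !rmorphM /= rmorphXn /= fmorphV /= !nrC.
  rewrite /t normrM (expfzDr _ _ a0) -exprnN normrM normfV normrX normr_nat.
  rewrite -exprVn mulrA ler_wpM2r ?exprn_ge0 ?invr_ge0 ?normr_ge0 //.
  rewrite ler_wpM2r ?normr_ge0 // rmorph_nat ler_nat ltnW // hd //.
  by rewrite lerBlDr lerDl.
set nt := fun i => nr (t i).
have sumb : forall n, \sum_(i < n) nt i <= M / (1 - q).
  move=> n; apply: (@le_trans _ _ (\sum_(i < n) M * q ^+ i)).
    by apply: ler_sum => i _; apply: tb.
  rewrite -mulr_sumr ler_wpM2l // -[(1 - q)^-1]mul1r ler_pdivlMr ?subr_gt0 // mulr_suml geom.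
  have : 0 <= q ^+ n by rewrite exprn_ge0 // ltW.
  lra.
set B := M / (1 - q).
have hS : forall n, alpha_psum alpha k d n = \sum_(i < n) t i by [].
have Re_sum : forall n, complex.Re (\sum_(i < n) t i) = \sum_(i < n) complex.Re (t i).
  by move=> n; rewrite raddf_sum.
have Im_sum : forall n, complex.Im (\sum_(i < n) t i) = \sum_(i < n) complex.Im (t i).
  by move=> n; rewrite raddf_sum.
have [a Ha] : exists a, forall e, 0 < e -> exists N, forall n, (N <= n)%N ->
    `|\sum_(i < n) (complex.Re (t i) + nt i) - a| < e.
  apply: (@mono_cvg _ _ (B + B)).
    move=> n; rewrite big_ord_recr /= lerDl.
    have := Re_le_nr (t n); rewrite /nt. move: (complex.Re (t n)) => x.
    have := ler_norm (- x); rewrite normrN. lra.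
  move=> n; rewrite big_split /= lerD ?sumb //.
  apply: (le_trans _ (sumb n)); apply: ler_sum => i _.
  exact: le_trans (ler_norm _) (Re_le_nr _).
have [c Hc] : exists c, forall e, 0 < e -> exists N, forall n, (N <= n)%N ->
    `|\sum_(i < n) (complex.Im (t i) + nt i) - c| < e.
  apply: (@mono_cvg _ _ (B + B)).
    move=> n; rewrite big_ord_recr /= lerDl.
    have := Im_le_nr (t n); rewrite /nt. move: (complex.Im (t n)) => x.
    have := ler_norm (- x); rewrite normrN. lra.
  move=> n; rewrite big_split /= lerD ?sumb //.
  apply: (le_trans _ (sumb n)); apply: ler_sum => i _.
  exact: le_trans (ler_norm _) (Im_le_nr _).
have [b Hb] : exists b, forall e, 0 < e -> exists N, forall n, (N <= n)%N ->
    `|\sum_(i < n) nt i - b| < e.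
  apply: (@mono_cvg _ _ B) => // n.
  by rewrite big_ord_recr /= lerDl /nt nr_ge0.
exists (Complex (a - b) (c - b)) => e e0.
have e4 : 0 < e / 4 by rewrite divr_gt0.
have [N1 H1] := Ha _ e4; have [N2 H2] := Hb _ e4; have [N3 H3] := Hc _ e4.
exists (maxn N1 (maxn N2 N3)) => n hn.
have h1 := H1 n (leq_trans (leq_maxl _ _) hn).
have h2 := H2 n (leq_trans (leq_maxl _ _) (leq_trans (leq_maxr _ _) hn)).
have h3 := H3 n (leq_trans (leq_maxr _ _) (leq_trans (leq_maxr _ _) hn)).
rewrite -nrC ltcR hS; apply: (le_lt_trans (nr_le _)).
rewrite !raddfB /= Re_sum Im_sum.
move: h1 h3; rewrite !big_split /= => h1 h3.
move: h1 h2 h3.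
move: (\sum_(i < n) complex.Re (t i)) (\sum_(i < n) complex.Im (t i)) (\sum_(i < n) nt i) => x y z.
move=> h1 h2 h3.
have g1 : `|x + (- a - - b)| <= `|x + z - a| + `|z - b|.
  by rewrite (_ : x + (- a - - b) = (x + z - a) - (z - b)); [exact: ler_normB | ring].
have g2 : `|y + (- c - - b)| <= `|y + z - c| + `|z - b|.
  by rewrite (_ : y + (- c - - b) = (y + z - c) - (z - b)); [exact: ler_normB | ring].
lra.
Qed.

Set Implicit Arguments.
Unset Strict Implicit.

Section K.
Variable R : realType.
Implicit Types x y z a b c e p g q r w : R[i].

Lemma gi_int (n : int) : gaussInt (n%:~R : R[i]).
Proof.
exists n, 0; rewrite -[LHS](rmorph_int (real_complex R)).
by rewrite /= mulr0z.
Qed.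
Lemma gi0 : gaussInt (0 : R[i]). Proof. exact: (gi_int 0). Qed.
Lemma gi1 : gaussInt (1 : R[i]). Proof. exact: (gi_int 1). Qed.
Lemma giD x y : gaussInt x -> gaussInt y -> gaussInt (x + y).
Proof.
move=> [a [b ->]] [c [d ->]]; exists (a + c), (b + d).
by rewrite /= !rmorphD.
Qed.
Lemma giN x : gaussInt x -> gaussInt (- x).
Proof. by move=> [a [b ->]]; exists (- a), (- b); rewrite /= !rmorphN. Qed.
Lemma giB x y : gaussInt x -> gaussInt y -> gaussInt (x - y).
Proof. by move=> hx hy; apply: giD => //; apply: giN. Qed.
Lemma giM x y : gaussInt x -> gaussInt y -> gaussInt (x * y).
Proof.
move=> [a [b ->]] [c [d ->]]; exists (a * c - b * d), (a * d + b * c).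
by rewrite /= !rmorphD !rmorphN !rmorphM.
Qed.
Lemma giX x n : gaussInt x -> gaussInt (x ^+ n).
Proof.
move=> hx; elim: n => [|n IH]; first by rewrite expr0; apply: gi1.
by rewrite exprS; apply: giM.
Qed.

Lemma gnormC x : (gnorm x)%:C = `|x| ^+ 2.
Proof. by rewrite /gnorm add_Re2_Im2. Qed.
Lemma gnormM x y : gnorm (x * y) = gnorm x * gnorm y.
Proof. by apply: complexI; rewrite rmorphM /= !gnormC normrM exprMn. Qed.
Lemma gnorm_ge0 x : 0 <= gnorm x.
Proof. by rewrite /gnorm addr_ge0 ?sqr_ge0. Qed.
Lemma gnorm_eq0 x : gnorm x = 0 -> x = 0.
Proof.
move=> h; apply/eqP; rewrite -normr_eq0.
have : `|x| ^+ 2 == 0 by rewrite -gnormC h.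
by rewrite expf_eq0.
Qed.
Lemma gnorm_nat x : gaussInt x -> exists n : nat, gnorm x = n%:R.
Proof.
move=> [a [b ->]]; exists (absz (a ^+ 2 + b ^+ 2)).
rewrite natr_absz ger0_norm ?addr_ge0 ?sqr_ge0 //.
by rewrite /gnorm /= rmorphD !rmorphXn.
Qed.

Lemma gnorm1_unit x : gaussInt x -> gnorm x = 1 -> gunit x.
Proof.
move=> hx; case: (hx) => a [b ex] h; split => //.
exists (Complex a%:~R (- b)%:~R); split; first by exists a, (- b).
move: h; rewrite ex /gnorm /= rmorphN => h.
apply/eqP; rewrite eq_complex /=; apply/andP; split; apply/eqP.
  by rewrite -[RHS]h; ring.
ring.
Qed.

Lemma gprime_norm p : gprime p -> exists n : nat, gnorm p = n.+2%:R.
Proof.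
case=> gp p0 nu _; have [[|[|n]] hn] := gnorm_nat gp.
- by case: p0; apply: gnorm_eq0.
- by case: nu; apply: gnorm1_unit.
- by exists n.
Qed.

Lemma gnorm_gt1 p : gprime p -> 1 < gnorm p.
Proof. by move=> /gprime_norm [n ->]; rewrite ltr1n. Qed.

Lemma round_ex (x : R) : exists z : int, `|x - z%:~R| <= 2^-1.
Proof.
exists (Num.floor (x + 2^-1)).
have := floor_itv (x + 2^-1); rewrite rmorphD /= => /andP [h1 h2].
rewrite ler_norml; apply/andP; split; lra.
Qed.

Lemma gdiv a b : gaussInt a -> gaussInt b -> b != 0 ->
  exists q, gaussInt q /\ gnorm (a - b * q) < gnorm b.
Proof.
move=> ha hb b0.
set w := a / b.
have [zx hx] := round_ex (complex.Re w).
have [zy hy] := round_ex (complex.Im w).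
exists (Complex zx%:~R zy%:~R); split; first by exists zx, zy.
have -> : a - b * Complex zx%:~R zy%:~R = b * (w - Complex zx%:~R zy%:~R).
  by rewrite /w mulrBr mulrCA divff // mulr1.
rewrite gnormM.
have gb : 0 < gnorm b.
  rewrite lt_def gnorm_ge0 andbT; apply/eqP => h; move/eqP: b0; apply.
  exact: gnorm_eq0.
suff : gnorm (w - Complex zx%:~R zy%:~R) < 1.
  by move=> h; rewrite -[X in _ < X]mulr1 ltr_pM2l.
rewrite /gnorm !raddfB /=.
move: hx hy; move: (complex.Re w - zx%:~R) (complex.Im w - zy%:~R) => u v.
rewrite !ler_norml => /andP [h1 h2] /andP [h3 h4].
have k1 : 0 <= (2^-1 - u) * (2^-1 + u) by rewrite mulr_ge0 //; lra.
have k2 : 0 <= (2^-1 - v) * (2^-1 + v) by rewrite mulr_ge0 //; lra.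
nra.
Qed.

Lemma norm_lt_le r g (n : nat) : gaussInt r -> gaussInt g ->
  gnorm r < gnorm g -> gnorm g <= n.+1%:R -> gnorm r <= n%:R.
Proof.
move=> /gnorm_nat [m ->] /gnorm_nat [m' ->].
rewrite !ltr_nat !ler_nat => h1 h2; rewrite -ltnS; exact: leq_trans h1 h2.
Qed.

Definition gideal p a g := exists x y, gaussInt x /\ gaussInt y /\ g = p * x + a * y.

Lemma gideal_gi p a g : gaussInt p -> gaussInt a -> gideal p a g -> gaussInt g.
Proof. by move=> hp ha [x [y [hx [hy ->]]]]; apply: giD; apply: giM. Qed.

Lemma gideal_rem p a g q b : gideal p a g -> gaussInt q -> gideal p a b ->
  gideal p a (b - g * q).
Proof.
move=> [x [y [hx [hy ->]]]] hq [x' [y' [hx' [hy' ->]]]].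
exists (x' - x * q), (y' - y * q); split; first by apply: giB => //; apply: giM.
split; first by apply: giB => //; apply: giM.
ring.
Qed.

Lemma gideal_min p a (n : nat) g : gaussInt p -> gaussInt a ->
  gideal p a g -> g != 0 -> gnorm g <= n%:R ->
  exists g', [/\ gideal p a g', g' != 0, gdvd g' p & gdvd g' a].
Proof.
move=> hp ha; elim: n g => [|n IH] g hg g0 hn.
  case/negP: g0; apply/eqP; apply: gnorm_eq0; apply/eqP.
  by rewrite eq_le hn gnorm_ge0.
have gg := gideal_gi hp ha hg.
have ip : gideal p a p by exists 1, 0; split; [exact: gi1|split; [exact: gi0|ring]].
have ia : gideal p a a by exists 0, 1; split; [exact: gi0|split; [exact: gi1|ring]].
have [q1 [hq1 hr1]] := gdiv hp gg g0.
have [q2 [hq2 hr2]] := gdiv ha gg g0.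
have i1 := gideal_rem hg hq1 ip.
have i2 := gideal_rem hg hq2 ia.
have gr1 := gideal_gi hp ha i1.
have gr2 := gideal_gi hp ha i2.
case: (eqVneq (p - g * q1) 0) => e1.
  case: (eqVneq (a - g * q2) 0) => e2.
    exists g; split => //.
      by exists q1; split => //; apply/eqP; rewrite -subr_eq0 e1.
    by exists q2; split => //; apply/eqP; rewrite -subr_eq0 e2.
  by apply: (IH _ i2 e2); apply: norm_lt_le hr2 hn.
by apply: (IH _ i1 e1); apply: norm_lt_le hr1 hn.
Qed.

Lemma eq_le_trans_aux (x y : R) : x = y -> x <= y.
Proof. by move=> ->. Qed.

Lemma bezout p a : gprime p -> gaussInt a -> ~ gdvd p a ->
  exists x y, gaussInt x /\ gaussInt y /\ p * x + a * y = 1.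
Proof.
move=> pp ha npa; have [gp p0 nu irr] := pp.
have [n hn] := gnorm_nat gp.
have ip : gideal p a p by exists 1, 0; split; [exact: gi1|split; [exact: gi0|ring]].
have [g [[x [y [hx [hy eg]]]] g0 [c [hc pc]] [e [he ae]]]] :=
  @gideal_min p a n p gp ha ip (introN eqP p0) (eq_le_trans_aux hn).
have gg : gaussInt g by rewrite eg; apply: giD; apply: giM.
case: (irr g c gg hc pc) => [[_ [h [hh gh]]]|[_ [v [hv cv]]]].
  exists (x * h), (y * h); split; first exact: giM.
  split; first exact: giM.
  by rewrite -gh eg; ring.
case: npa; exists (v * e); split; first exact: giM.
rewrite ae (_ : g = p * v); first ring.
by rewrite pc -mulrA cv mulr1.
Qed.

Lemma euclid p a b : gprime p -> gaussInt a -> gaussInt b ->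
  gdvd p (a * b) -> gdvd p a \/ gdvd p b.
Proof.
move=> pp ha hb [c [hc abc]].
case: (classic (gdvd p a)) => hpa; [by left|right].
have [x [y [hx [hy exy]]]] := bezout pp ha hpa.
exists (x * b + c * y); split; first by apply: giD; apply: giM.
rewrite -[LHS]mul1r -exy mulrDl -mulrA (mulrC a y) -mulrA abc; ring.
Qed.

Lemma euclidN p a b : gprime p -> gaussInt a -> gaussInt b ->
  ~ gdvd p a -> ~ gdvd p b -> ~ gdvd p (a * b).
Proof. by move=> pp ha hb na nb /(euclid pp ha hb) []. Qed.

Lemma euclidX p a n : gprime p -> gaussInt a -> ~ gdvd p a -> ~ gdvd p (a ^+ n).
Proof.
move=> pp ha na; elim: n => [|n IH].
  rewrite expr0 => -[c [hc e1]]; have [_ _ nu _] := pp; apply: nu.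
  by split; [case: pp | exists c].
rewrite exprS; apply: euclidN => //; exact: giX.
Qed.

Lemma gi_ne0_norm c : gaussInt c -> c != 0 -> 0 < gnorm c.
Proof.
move=> _ c0; rewrite lt_def gnorm_ge0 andbT; apply/eqP => h.
by case/eqP: c0; apply: gnorm_eq0.
Qed.

Lemma strip p c : gprime p -> gaussInt c -> c != 0 ->
  exists (r : nat) c', [/\ gaussInt c', ~ gdvd p c' & c = p ^+ r * c'].
Proof.
move=> pp gc c0; have [n hn] := gnorm_nat gc.
have : gnorm c <= n%:R by rewrite hn.
elim: n c gc c0 {hn} => [|n IH] c gc c0 hn.
  have := gi_ne0_norm gc c0; lra.
case: (classic (gdvd p c)) => hpc; last by exists 0%N, c; rewrite expr0 mul1r.
case: hpc => c1 [gc1 ec].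
have c10 : c1 != 0 by apply: contraNneq c0 => h; rewrite ec h mulr0.
have lt : gnorm c1 < gnorm c.
  rewrite ec gnormM -[X in X < _]mul1r ltr_pM2r ?gi_ne0_norm //.
  exact: gnorm_gt1.
have [r [c' [gc' nc' ec']]] := IH c1 gc1 c10 (norm_lt_le gc1 gc lt hn).
by exists r.+1, c'; rewrite ec ec' exprS mulrA.
Qed.

Definition prep p x (m : int) := exists (m' : int) c e,
  [/\ m <= m', gaussInt c, gaussInt e, e != 0 & ~ gdvd p e /\ x = p ^ m' * (c / e)].

Lemma pval_ge p x m : gprime p -> x != 0 -> prep p x m -> m <= pval p x.
Proof.
move=> pp x0 [m' [c [e [hm gc ge e0 [ne ex]]]]].
have p0 : p != 0 by case: pp => _ p0 _ _; apply/eqP.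
have c0 : c != 0 by apply: contraNneq x0 => h; rewrite ex h mul0r mulr0.
have [r [c' [gc' nc' ec]]] := strip pp gc c0.
have hex : exists n, is_pval p x n.
  exists (m' + r%:Z), c', e; split; first done; split; first done.
  split; first by apply/eqP. split; first done; split; first done.
  rewrite ex ec expfzDr //.
  change (p ^ (r%:Z)) with (p ^+ r); ring.
have := epsilon_spec (inhabits 0) (is_pval p x) hex.
rewrite -/(pval p x); set n := pval p x.
move=> [a [b [ga [gb [b0 [na [nb exn]]]]]]].
apply: le_trans hm _; rewrite leNgt; apply/negP => hlt.
have [k hk] : exists k : nat, m' = n + k.+1%:Z.
  exists (`|m' - n| - 1)%N; lia.
have pn0 : p ^ n != 0 by apply: expfz_neq0.
have h2 : a / b = p ^+ k.+1 * (c / e).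
  apply: (mulfI pn0); rewrite -exn ex hk expfzDr //.
  change (p ^ (k.+1%:Z)) with (p ^+ k.+1); ring.
have h3 : a * e = p * (p ^+ k * c * b).
  have -> : a = (a / b) * b by rewrite divfK //; apply/eqP.
  rewrite h2 exprS; field; exact: e0.
have : gdvd p (a * e).
  by exists (p ^+ k * c * b); split => //; apply: giM => //; apply: giM => //; apply: giX; case: pp.
by case/(euclid pp ga ge).
Qed.

Lemma absp_le p x (s : nat) : gprime p -> prep p x s -> absp p x <= (gnorm p ^+ s)^-1.
Proof.
move=> pp hx; have g1 := gnorm_gt1 pp.
have gs : 0 < gnorm p ^+ s by rewrite exprn_gt0 //; lra.
rewrite /absp; case: eqP => [_|/eqP x0]; first by rewrite invr_ge0 ltW.
have hv := pval_ge pp x0 hx.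
have [t ->] : exists t : nat, pval p x = (s + t)%N.
  exists `|pval p x - s|%N; lia.
rewrite -exprnN exprD invfM.
have h : (gnorm p ^+ t)^-1 <= 1.
  rewrite invf_le1 ?exprn_gt0 //; last lra.
  apply: exprn_ege1; lra.
rewrite -[X in _ <= X]mulr1; apply: ler_wpM2l => //; rewrite invr_ge0 ltW //.
Qed.

Lemma ndvd1 p : gprime p -> ~ gdvd p 1.
Proof.
case=> gp _ nu _ [c [gc e1]]; apply: nu; split => //.
by exists c; split.
Qed.

Lemma prep_le p x m m0 : prep p x m -> m0 <= m -> prep p x m0.
Proof.
move=> [m' [c [e [hm gc ge e0 [ne ex]]]]] h.
by exists m', c, e; split => //; apply: le_trans h hm.
Qed.

Lemma prep0 p m : gprime p -> prep p 0 m.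
Proof.
move=> pp; exists m, 0, 1; split => //; [exact: gi0|exact: gi1|exact: oner_neq0|].
by split; [exact: ndvd1 | rewrite mul0r mulr0].
Qed.

Lemma prep1 p : gprime p -> prep p 1 0.
Proof.
move=> pp; exists 0, 1, 1; split => //; [exact: gi1|exact: gi1|exact: oner_neq0|].
by split; [exact: ndvd1 | rewrite expr0z divr1 mulr1].
Qed.

Lemma prep_mulgi p c0 x m : gaussInt c0 -> prep p x m -> prep p (c0 * x) m.
Proof.
move=> g0 [m' [c [e [hm gc ge e0 [ne ex]]]]].
exists m', (c0 * c), e; split => //; first exact: giM.
by split => //; rewrite ex; ring.
Qed.

Lemma prep_opp p x m : prep p x m -> prep p (- x) m.
Proof.
move=> h; rewrite -mulN1r; apply: prep_mulgi h.
exact: (gi_int (-1)).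
Qed.

Lemma prep_add p x y m : gprime p -> prep p x m -> prep p y m -> prep p (x + y) m.
Proof.
move=> pp [a [c [e [ha gc ge e0 [ne ex]]]]] [b [c' [e' [hb gc' ge' e0' [ne' ey]]]]].
have gp : gaussInt p by case: pp.
have p0 : p != 0 by case: pp => _ p0 _ _; apply/eqP.
have [A hA] : exists A : nat, a = m + A%:Z by exists `|a - m|%N; lia.
have [B hB] : exists B : nat, b = m + B%:Z by exists `|b - m|%N; lia.
exists m, (p ^+ A * c * e' + p ^+ B * c' * e), (e * e'); split => //.
- by apply: giD; apply: giM => //; apply: giM => //; apply: giX.
- exact: giM.
- by rewrite mulf_neq0.
split; first exact: euclidN.
rewrite ex ey hA hB !expfzDr //.
change (p ^ (A%:Z)) with (p ^+ A); change (p ^ (B%:Z)) with (p ^+ B).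
by field; rewrite e0 e0'.
Qed.

Lemma prep_mul p x y m n : gprime p -> prep p x m -> prep p y n -> prep p (x * y) (m + n).
Proof.
move=> pp [a [c [e [ha gc ge e0 [ne ex]]]]] [b [c' [e' [hb gc' ge' e0' [ne' ey]]]]].
have p0 : p != 0 by case: pp => _ p0 _ _; apply/eqP.
exists (a + b), (c * c'), (e * e'); split => //.
- exact: lerD.
- exact: giM.
- exact: giM.
- by rewrite mulf_neq0.
split; first exact: euclidN.
rewrite ex ey !expfzDr //.
by field; rewrite e0 e0'.
Qed.

Lemma prep_X p x (j : nat) : gprime p -> prep p x 1 -> prep p (x ^+ j) j%:Z.
Proof.
move=> pp hx; elim: j => [|j IH]; first by rewrite expr0; apply: prep1.
rewrite exprS; apply: prep_le (prep_mul pp hx IH) _; lia.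
Qed.

Lemma gi_nat n : gaussInt (n%:R : R[i]).
Proof. exact: (gi_int n). Qed.

Lemma small_pow p (e : R) : gprime p -> 0 < e -> exists s : nat, (gnorm p ^+ s)^-1 < e.
Proof.
move=> pp e0; have [n hn] := gprime_norm pp.
set g := gnorm p.
have g2 : 2 <= g by rewrite /g hn ler_nat.
have hs : forall s : nat, s%:R <= g ^+ s.
  elim=> [|s IH]; first by rewrite expr0 mulr0n ler01.
  have h1 : 1 <= g ^+ s by apply: exprn_ege1; lra.
  have h2 : 0 <= (g - 2) * g ^+ s by rewrite mulr_ge0 //; lra.
  rewrite exprS -natr1; nra.
exists (Num.Def.archi_bound e^-1).
have ei : 0 <= e^-1 by rewrite invr_ge0 ltW.
have := archi_boundP ei.
have := hs (Num.Def.archi_bound e^-1).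
move=> h1 h2.
have gs : 0 < g ^+ Num.Def.archi_bound e^-1 by rewrite exprn_gt0 //; lra.
rewrite invf_plt ?posrE //.
exact: lt_le_trans h2 h1.
Qed.

Lemma partK (alpha num den p : R[i]) (k : int) (d : int -> nat) :
  gaussInt num -> gaussInt den -> den <> 0 -> alpha = num / den ->
  (forall q, gprime q -> gdvd q num -> gdvd q den -> False) ->
  gprime p -> gdvd p den -> cvgKp p (alpha_psum alpha k d).
Proof.
move=> gn gd d0 ea cop pp [den1 [gd1 ed]].
have npn : ~ gdvd p num by move=> h; apply: (cop p pp h); exists den1.
have n0 : num != 0.
  apply/eqP => h; apply: npn; rewrite h; exists 0; split; [exact: gi0|by rewrite mulr0].
have hb : prep p (alpha^-1) 1.
  exists 1, den1, num; split => //; split => //.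
  by rewrite ea invf_div ed expr1z mulrA.
set t := fun i : nat => (d (k - i%:Z))%:R * alpha ^ (k - i%:Z).
have ht : forall (s i : nat), (`|k|%N + s <= i)%N -> prep p (t i) s.
  move=> s i hi; set j := `|i%:Z - k|%N.
  have ej : k - i%:Z = - (j%:Z) by rewrite /j; lia.
  have sj : (s <= j)%N by rewrite /j; lia.
  rewrite /t ej -exprnN -exprVn; apply: prep_mulgi; first exact: gi_nat.
  by apply: prep_le (prep_X j pp hb) _; rewrite lez_nat.
move=> e e0; have [s hs] := small_pow pp e0.
set N := (`|k|%N + s)%N.
have split_sum : forall m, (N <= m)%N ->
    alpha_psum alpha k d m = \sum_(i < N) t i + \sum_(N <= i < m) t i.
  move=> m hm; rewrite /alpha_psum -[LHS](big_mkord xpredT t) (big_cat_nat (leq0n N) hm).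
  by rewrite big_mkord.
have tail : forall m, prep p (\sum_(N <= i < m) t i) s.
  move=> m; rewrite big_seq; apply: (big_ind (fun x => prep p x s)).
  - exact: prep0.
  - by move=> x y; apply: prep_add.
  - by move=> i; rewrite mem_index_iota => /andP [h _]; apply: ht.
exists N => m n hm hn.
rewrite (split_sum m hm) (split_sum n hn).
have -> : forall A X Y : R[i], (A + X) - (A + Y) = X - Y by move=> *; ring.
apply: le_lt_trans hs; apply: absp_le => //.
exact: prep_add pp (tail m) (prep_opp (tail n)).
Qed.
End K.

Unset Implicit Arguments.
End Aux.
Import Aux.

Theorem mainTheorem12 (R : realType) (alpha : R[i]) (a0 a1 a2 : int)
  (num den : R[i]) :
  gaussRat alpha -> complex.Im alpha != 0 -> 1 < `|alpha| ->
  gcdz (gcdz a0 a1) a2 = 1 -> 0 < a2 ->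
  a2%:~R * alpha ^+ 2 + a1%:~R * alpha + a0%:~R = 0 ->
  gaussInt num -> gaussInt den -> den <> 0 -> alpha = num / den ->
  (forall q : R[i], gprime q -> gdvd q num -> gdvd q den -> False) ->
  forall (k : int) (d : int -> nat),
    (forall j : int, j <= k -> (d j < `|a0|)%N) ->
    cvgC (alpha_psum alpha k d) /\
    (forall p : R[i], gprime p -> gdvd p den -> cvgKp p (alpha_psum alpha k d)).
Proof.
move=> _ _ ha _ _ _ gn gd d0 ea cop k d hd; split.
  exact: (@partC R alpha k d `|a0|%N ha hd).
move=> p pp pd; exact: (@partK R alpha num den p k d gn gd d0 ea cop pp pd).
Qed.
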